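(* Let $G$ be a finite-rank splitter, let $0\neq U$ be a pure subgroup of $G$, and let $p$ be a prime with $1/p\in\mathrm{nuc}\,U\setminus\mathrm{nuc}\,G$. Then $\mathrm{Ext}(\mathbb{Q}^{(p)},G)=0$.
   Context: For a torsion-free abelian group $G\neq0$, $\mathrm{nuc}\,G$ is the largest subring $R$ of $\mathbb{Q}$ such that $G$ is an $R$-module. A torsion-free $R$-module $G$ over its nucleus $R$ is a finite-rank splitter if $\mathrm{Ext}(G',G)=0$ for all finite-rank $R$-submodules $G'$ of $G$. $\mathbb{Q}^{(p)}=\{z/p^k: z\in\mathbb{Z},k\in\mathbb{N}\}\subseteq\mathbb{Q}$. A subgroup $U\subseteq G$ is pure if $G/U$ is torsion-free. *)

(* Defs.v *)
From HB Require Import structures.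
From mathcomp Require Import all_boot all_order all_algebra.
Set Implicit Arguments. Unset Strict Implicit. Unset Printing Implicit Defensive.
Import Order.TTheory GRing.Theory Num.Theory.
Local Open Scope ring_scope.

Definition torsion_free (G : zmodType) : Prop :=
  forall (x : G) (n : nat), x *+ n.+1 = 0 -> x = 0.

Definition subgroup (G : zmodType) (S : G -> Prop) : Prop :=
  S 0 /\ forall x y, S x -> S y -> S (x - y).

(* q \in nuc S : multiplication by q (computed in the divisible hull) maps
   S into S, i.e. for every s in S there is t in S with (denq q) t = (numq q) s. *)
Definition in_nuc (G : zmodType) (S : G -> Prop) (q : rat) : Prop :=
  forall s, S s -> exists2 t, S t & t *~ denq q = s *~ numq q.

Definition nuc_submodule (G : zmodType) (S : G -> Prop) : Prop :=
  subgroup S /\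
  forall q : rat, in_nuc (fun _ : G => True) q ->
    forall s, S s -> exists2 t, S t & t *~ denq q = s *~ numq q.

Definition Z_indep (G : zmodType) (s : seq G) : Prop :=
  forall c : nat -> int, \sum_(i < size s) s`_i *~ c i = 0 ->
    forall i, (i < size s)%N -> c i = 0.

Definition finite_rank (G : zmodType) (S : G -> Prop) : Prop :=
  exists n : nat, forall s : seq G, (forall x, x \in s -> S x) -> Z_indep s ->
    (size s <= n)%N.

(* Ext(A, G) = 0, A a subgroup of H: every extension 0 -> G -> E -> A -> 0 splits. *)
Definition Ext_zero (H : zmodType) (A : H -> Prop) (G : zmodType) : Prop :=
  forall (E : zmodType) (i : G -> E) (pi : E -> H),
    (forall x y, i (x - y) = i x - i y) ->
    (forall x y, pi (x - y) = pi x - pi y) ->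
    injective i ->
    (forall e, A (pi e)) ->
    (forall a, A a -> exists e, pi e = a) ->
    (forall e, pi e = 0 <-> exists g, i g = e) ->
    exists r : E -> G, (forall x y, r (x - y) = r x - r y) /\
                       (forall g, r (i g) = g).

Definition fr_splitter (G : zmodType) : Prop :=
  torsion_free G /\ (exists g : G, g != 0) /\
  forall S : G -> Prop, nuc_submodule S -> finite_rank S -> Ext_zero S G.

Definition pure (G : zmodType) (U : G -> Prop) : Prop :=
  subgroup U /\ forall (g : G) (n : nat), U (g *+ n.+1) -> U g.

Definition Qp (p : nat) : rat -> Prop :=
  fun q => exists (z : int) (k : nat), q = z%:~R / (p ^ k)%:R.

(* Main.v *)
Require Import Defs.
From HB Require Import structures.
From mathcomp Require Import all_boot all_order all_algebra ring zify.
From Stdlib Require Import ClassicalEpsilon.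
Set Implicit Arguments. Unset Strict Implicit. Unset Printing Implicit Defensive.
Import Order.TTheory GRing.Theory Num.Theory.
Local Open Scope ring_scope.
Lemma addf_props (A B : zmodType) (f : A -> B) :
  (forall x y, f (x - y) = f x - f y) ->
  [/\ f 0 = 0, forall x, f (- x) = - f x, forall x y, f (x + y) = f x + f y
    & forall x n, f (x *~ n) = f x *~ n].
Proof.
move=> H.
have f0 : f 0 = 0 by rewrite -(subrr 0) H subrr.
have fN : forall x, f (- x) = - f x by move=> x; rewrite -sub0r H f0 sub0r.
have fD : forall x y, f (x + y) = f x + f y.
  by move=> x y; have := H x (- y); rewrite opprK => ->; rewrite fN opprK.
have fn : forall x (n : nat), f (x *+ n) = f x *+ n.
  by move=> x; elim=> [|n IH]; [by rewrite !mulr0n f0 | by rewrite !mulrS fD IH].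
split=> // x [] n; first by rewrite -!pmulrn fn.
by rewrite !NegzE !mulrNz fN -!pmulrn fn.
Qed.

Definition asb (P : Prop) : bool :=
  if excluded_middle_informative P then true else false.
Lemma asbP (P : Prop) : asb P <-> P.
Proof. by rewrite /asb; case: excluded_middle_informative. Qed.

Section TF.
Variable G : zmodType.
Hypothesis tf : torsion_free G.

Lemma tfz (x : G) (n : int) : n != 0 -> x *~ n = 0 -> x = 0.
Proof.
case: n => [[|m]|m] //= _.
  by rewrite -pmulrn; apply: tf.
by rewrite NegzE mulrNz -pmulrn => /eqP; rewrite oppr_eq0 => /eqP; apply: tf.
Qed.

Lemma repch (t g : G) (a b a' b' : int) : 0 < b -> 0 < b' ->
  (a%:~R / b%:~R = a'%:~R / b'%:~R :> rat) -> t *~ b = g *~ a -> t *~ b' = g *~ a'.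
Proof.
move=> hb hb' E H.
have hb0 : (b%:~R : rat) != 0 by rewrite intr_eq0 gt_eqF.
have hb0' : (b'%:~R : rat) != 0 by rewrite intr_eq0 gt_eqF.
have E2 : a * b' = a' * b.
  apply: (@intr_inj rat); rewrite !intrM.
  move: E; move/eqP; rewrite eqr_div // => /eqP ->; by [].
apply/eqP; rewrite -subr_eq0; apply/eqP; apply: (@tfz _ b); first by rewrite gt_eqF.
by rewrite mulrzBl -!mulrzA -E2 [b' * b]mulrC !mulrzA H subrr.
Qed.

Definition Dv (r : rat) (g t : G) := exists a b : int,
  [/\ 0 < b, r = a%:~R / b%:~R & t *~ b = g *~ a].

Lemma Dv_uniq r g t t' : Dv r g t -> Dv r g t' -> t = t'.
Proof.
move=> [a [b [hb Er Ht]]] [a' [b' [hb' Er' Ht']]].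
have := repch hb hb' (etrans (esym Er) Er') Ht; rewrite -Ht' => /eqP.
rewrite -subr_eq0 -mulrzBl => /eqP /tfz; rewrite gt_eqF // => /(_ isT) /eqP.
by rewrite subr_eq0 => /eqP.
Qed.

Lemma Dv_rep r g t (a b : int) : Dv r g t -> 0 < b -> r = a%:~R / b%:~R ->
  t *~ b = g *~ a.
Proof.
move=> [a0 [b0 [hb0 E0 H0]]] hb E; exact: (repch hb0 hb (etrans (esym E0) E) H0).
Qed.

Lemma Dv_add r r' g t t' : Dv r g t -> Dv r' g t' -> Dv (r + r') g (t + t').
Proof.
move=> [a [b [hb Er Ht]]] [a' [b' [hb' Er' Ht']]].
exists (a * b' + a' * b), (b * b'); split; first by rewrite mulr_gt0.
  have hb0 : (b%:~R : rat) != 0 by rewrite intr_eq0 gt_eqF.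
  have hb0' : (b'%:~R : rat) != 0 by rewrite intr_eq0 gt_eqF.
  rewrite Er Er' !(intrD, intrM); field; by rewrite hb0 hb0'.
have E1 : t' *~ b *~ b' = g *~ a' *~ b by rewrite -mulrzA mulrC mulrzA Ht' -!mulrzA.
by rewrite mulrzDl mulrzDr !mulrzA Ht E1.
Qed.

Lemma Dv_opp r g t : Dv r g t -> Dv (- r) g (- t).
Proof.
move=> [a [b [hb Er Ht]]]; exists (- a), b; split => //.
  by rewrite Er intrN mulNr.
by rewrite mulNrz Ht mulrNz.
Qed.

Lemma Dv_mul r r' g t s : Dv r g t -> Dv r' t s -> Dv (r' * r) g s.
Proof.
move=> [a [b [hb Er Ht]]] [a' [b' [hb' Er' Ht']]].
exists (a' * a), (b' * b); split; first by rewrite mulr_gt0.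
  rewrite Er Er' !intrM; field.
  by rewrite !intr_eq0 !gt_eqF.
have E1 : s *~ (b' * b) = t *~ b *~ a'.
  by rewrite (mulrzA s b' b) Ht' -!mulrzA mulrC.
by rewrite E1 Ht -mulrzA mulrC.
Qed.

Lemma Dv_int (n : int) g : Dv n%:~R g (g *~ n).
Proof. by exists n, 1; split => //; rewrite divr1. Qed.

Lemma Dv_shift r g t (n : nat) : (0 < n)%N -> Dv r (g *+ n) t -> Dv (r * n%:R) g t.
Proof.
move=> hn [a [b [hb Er Ht]]]; exists (a * n%:Z), b; split => //.
  by rewrite Er intrM -pmulrn mulrAC.
by rewrite Ht pmulrn -!mulrzA mulrC.
Qed.

Definition RM (r : rat) := forall g : G, exists t, Dv r g t.

Lemma RM_nuc r : RM r <-> in_nuc (fun _ : G => True) r.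
Proof.
split.
  move=> H s _; have [t Ht] := H s; exists t => //.
  apply: Dv_rep Ht _ _; first exact: denq_gt0.
  by rewrite divq_num_den.
move=> H g; have [t _ Ht] := H g I; exists t, (numq r), (denq r).
split; [exact: denq_gt0 | by rewrite divq_num_den | exact: Ht].
Qed.

Lemma RM_add r r' : RM r -> RM r' -> RM (r + r').
Proof. move=> H H' g; have [t Ht] := H g; have [t' Ht'] := H' g.
by exists (t + t'); apply: Dv_add. Qed.
Lemma RM_opp r : RM r -> RM (- r).
Proof. by move=> H g; have [t Ht] := H g; exists (- t); apply: Dv_opp. Qed.
Lemma RM_mul r r' : RM r -> RM r' -> RM (r' * r).
Proof. move=> H H' g; have [t Ht] := H g; have [s Hs] := H' t.
by exists s; apply: Dv_mul Hs. Qed.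
Lemma RM_int (n : int) : RM n%:~R.
Proof. by move=> g; exists (g *~ n); apply: Dv_int. Qed.
Lemma RM_nat (n : nat) : RM n%:R.
Proof. by have := RM_int n; rewrite -pmulrn. Qed.

Definition act (r : rat) (g : G) : G :=
  epsilon (inhabits 0) (fun t => Dv r g t).

Lemma actP r g : RM r -> Dv r g (act r g).
Proof. by move=> H; rewrite /act; apply: epsilon_spec; apply: H. Qed.

Lemma act_eq r g t : Dv r g t -> act r g = t.
Proof. by move=> H; apply: (Dv_uniq _ H); rewrite /act; apply: epsilon_spec; exists t. Qed.

Lemma actD r r' g : RM r -> RM r' -> act (r + r') g = act r g + act r' g.
Proof. by move=> H H'; apply: act_eq; apply: Dv_add; apply: actP. Qed.

Lemma act0 g : act 0 g = 0.
Proof. by apply: act_eq; exists 0, 1; split => //; rewrite mul0r. Qed.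

Lemma act1 g : act 1 g = g.
Proof. by apply: act_eq; exists 1, 1; split => //; rewrite divr1. Qed.

End TF.
Lemma zm_id1 (Z : zmodType) (A B C x y : Z) :
  (A + (x + y)) - (B + x) - (C + y) = A - B - C.
Proof.
by rewrite !opprD !addrA (ACl (1*4*6*(2*5)*(3*7)))/= !subrr !addr0.
Qed.

Section Ext.
Variables (G : zmodType) (tf : torsion_free G) (p : nat) (hp : (1 < p)%N).
Variable g : nat -> G.

Local Notation P := (p%:R : rat).
Local Notation RM := (@RM G).
Local Notation act := (@act G).

Definition Rp q := exists M : nat, RM (q * P ^+ M).

Lemma RM_up q M N : (M <= N)%N -> RM (q * P ^+ M) -> RM (q * P ^+ N).
Proof.
move=> hMN H; have -> : q * P ^+ N = P ^+ (N - M) * (q * P ^+ M).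
  by rewrite mulrCA -exprD subnK.
apply: (RM_mul H); rewrite -natrX; exact: RM_nat.
Qed.

Definition kq (q : rat) : nat :=
  match excluded_middle_informative (exists M, asb (RM (q * P ^+ M))) with
  | left H => ex_minn H | right _ => 0%N end.

Lemma kqP q : Rp q -> RM (q * P ^+ kq q) /\ forall M, RM (q * P ^+ M) -> (kq q <= M)%N.
Proof.
move=> [M HM]; rewrite /kq; case: excluded_middle_informative => [H|H]; last first.
  by exfalso; apply: H; exists M; apply/asbP.
case: ex_minnP => m /asbP Hm Hmin; split => // M' HM'; apply: Hmin; exact/asbP.
Qed.

Lemma Rp_RMN q N : Rp q -> (kq q <= N)%N -> RM (q * P ^+ N).
Proof. by move=> /kqP [H _] hN; apply: RM_up H. Qed.

Lemma kq_le q N : Rp q -> RM (q * P ^+ N) -> (kq q <= N)%N.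
Proof. by move=> /kqP [_ H] /H. Qed.

Lemma Rp_add q q' : Rp q -> Rp q' -> Rp (q + q').
Proof.
move=> [M HM] [M' HM']; exists (M + M')%N; rewrite mulrDl; apply: RM_add.
  by apply: (RM_up (leq_addr _ _)).
by apply: (RM_up (leq_addl _ _)).
Qed.

Lemma Rp_opp q : Rp q -> Rp (- q).
Proof. by move=> [M HM]; exists M; rewrite mulNr; apply: RM_opp. Qed.

Lemma Rp0 : Rp 0.
Proof. by exists 0%N; rewrite mul0r; have := @RM_int G 0. Qed.

Definition Gam q N := \sum_(kq q <= i < N) act (q * P ^+ i) (g i).

Lemma GamS q N : (kq q <= N)%N -> Gam q N.+1 = Gam q N + act (q * P ^+ N) (g N).
Proof. by move=> h; rewrite /Gam big_nat_recr. Qed.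

Lemma Gam0 N : Gam 0 N = 0.
Proof. by rewrite /Gam big1 // => i _; rewrite mul0r act0. Qed.

Definition F q q' N := Gam (q + q') N - Gam q N - Gam q' N.

Lemma FS q q' N : Rp q -> Rp q' -> (kq q <= N)%N -> (kq q' <= N)%N ->
  (kq (q + q') <= N)%N -> F q q' N.+1 = F q q' N.
Proof.
move=> Hq Hq' h1 h2 h3; rewrite /F !GamS // mulrDl actD //; first exact: zm_id1.
  exact: Rp_RMN. 
exact: Rp_RMN.
Qed.

Lemma F_stable q q' N N' : Rp q -> Rp q' -> (kq q <= N)%N -> (kq q' <= N)%N ->
  (kq (q + q') <= N)%N -> (N <= N')%N -> F q q' N' = F q q' N.
Proof.
move=> Hq Hq' h1 h2 h3; elim: N' => [|N' IH]; first by rewrite leqn0 => /eqP ->.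
rewrite leq_eqVlt => /orP [/eqP -> //|]; rewrite ltnS => hN.
rewrite FS ?IH //; apply: leq_trans hN; assumption.
Qed.

Definition f q q' := F q q' (kq q + kq q' + kq (q + q')).
Arguments f : simpl never.

Lemma fE q q' N : Rp q -> Rp q' -> (kq q <= N)%N -> (kq q' <= N)%N ->
  (kq (q + q') <= N)%N -> f q q' = F q q' N.
Proof.
move=> Hq Hq' h1 h2 h3; rewrite /f.
have k1 : (kq q <= kq q + kq q' + kq (q + q'))%N by lia.
have k2 : (kq q' <= kq q + kq q' + kq (q + q'))%N by lia.
have k3 : (kq (q + q') <= kq q + kq q' + kq (q + q'))%N by lia.
case: (leqP N (kq q + kq q' + kq (q + q'))) => hN.
  exact: F_stable.
symmetry; apply: F_stable => //; exact: ltnW.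
Qed.

Lemma fC q q' : f q q' = f q' q.
Proof.
rewrite /f /F [q' + q]addrC [(kq q' + kq q)%N]addnC; exact: addrAC.
Qed.

Lemma f0q q : f 0 q = 0.
Proof. by rewrite /f /F add0r Gam0 subr0 subrr. Qed.

Lemma fq0 q : f q 0 = 0.
Proof. by rewrite fC f0q. Qed.

Lemma zm_id2 (Z : zmodType) (a b c ab bc abc : Z) :
  (ab - a - b) + (abc - ab - c) = (bc - b - c) + (abc - a - bc).
Proof.
rewrite !addrA [LHS](ACl (4*2*3*6*(1*5))) [RHS](ACl (4*5*2*3*(1*6))) /=.
by rewrite !subrr !addr0.
Qed.

Lemma fcocycle q1 q2 q3 : Rp q1 -> Rp q2 -> Rp q3 ->
  f q1 q2 + f (q1 + q2) q3 = f q2 q3 + f q1 (q2 + q3).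
Proof.
move=> H1 H2 H3.
have H12 := Rp_add H1 H2; have H23 := Rp_add H2 H3.
set N := (kq q1 + kq q2 + kq q3 + kq (q1 + q2) + kq (q2 + q3) + kq (q1 + q2 + q3))%N.
have l1 : (kq q1 <= N)%N by rewrite /N; lia.
have l2 : (kq q2 <= N)%N by rewrite /N; lia.
have l3 : (kq q3 <= N)%N by rewrite /N; lia.
have l4 : (kq (q1 + q2) <= N)%N by rewrite /N; lia.
have l5 : (kq (q2 + q3) <= N)%N by rewrite /N; lia.
have l6 : (kq (q1 + q2 + q3) <= N)%N by rewrite /N; lia.
rewrite (fE H1 H2 l1 l2 l4) (fE H12 H3 l4 l3 l6) (fE H2 H3 l2 l3 l5).
have l6' : (kq (q1 + (q2 + q3)) <= N)%N by rewrite addrA.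
rewrite (fE H1 H23 l1 l5 l6') /F (addrA q1 q2 q3); exact: zm_id2.
Qed.

Definition Rpb q := asb (Rp q).
Definition Rty := {q : rat | Rpb q}.
Lemma RtyP (x : Rty) : Rp (val x).
Proof. by apply/asbP; exact: (valP x). Qed.
Definition r0 : Rty := exist _ 0 ((asbP _).2 Rp0).
Definition radd (x y : Rty) : Rty :=
  exist _ (val x + val y) ((asbP _).2 (Rp_add (RtyP x) (RtyP y))).
Definition ropp (x : Rty) : Rty :=
  exist _ (- val x) ((asbP _).2 (Rp_opp (RtyP x))).

Definition Ecar := (G * Rty)%type.
Definition eadd (x y : Ecar) : Ecar :=
  (x.1 + y.1 + f (val x.2) (val y.2), radd x.2 y.2).
Definition eopp (x : Ecar) : Ecar :=
  (- x.1 - f (val x.2) (- val x.2), ropp x.2).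
Definition ez : Ecar := (0, r0).

Lemma Eext (x y : Ecar) : x.1 = y.1 -> val x.2 = val y.2 -> x = y.
Proof. by case: x => a u; case: y => b v /= -> /val_inj ->. Qed.

Lemma zm_id3 (Z : zmodType) (a b c d e d' e' : Z) : d + e = d' + e' ->
  a + (b + c + d') + e' = a + b + d + c + e.
Proof.
move=> H; rewrite !addrA [RHS](ACl (1*2*4*3*5)) /= -!addrA H.
by rewrite !addrA.
Qed.

Lemma eaddA : associative eadd.
Proof.
move=> x y z; apply: Eext => /=; last exact: addrA.
have := fcocycle (RtyP x.2) (RtyP y.2) (RtyP z.2) => /= C.
exact: zm_id3.
Qed.

Lemma eaddC : commutative eadd.
Proof.
move=> x y; apply: Eext => /=; last exact: addrC.
by rewrite fC (addrC x.1).
Qed.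

Lemma eadd0 : left_id ez eadd.
Proof. by move=> x; apply: Eext => /=; rewrite ?add0r // f0q addr0. Qed.

Lemma eaddN : left_inverse ez eopp eadd.
Proof.
move=> x; apply: Eext => /=; last exact: addNr.
by rewrite fC addrAC subrK addNr.
Qed.

HB.instance Definition _ := Choice.on Ecar.
HB.instance Definition _ := GRing.isZmodule.Build Ecar eaddA eaddC eadd0 eaddN.

Definition Ei (x : G) : Ecar := (x, r0).
Variables (us : nat -> G) (usS : forall M, us M.+1 *+ p = us M) (us0 : us 0 != 0).

Lemma P_neq0 : P != 0.
Proof. by rewrite pnatr_eq0 -lt0n ltnW. Qed.

Lemma PX_neq0 N : P ^+ N != 0.
Proof. by rewrite expf_neq0 // P_neq0. Qed.

Lemma us_ne0 N : us N != 0.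
Proof.
elim: N => // N IH; apply/eqP => H; move: IH; rewrite -usS H mul0rn eqxx //.
Qed.

Lemma Dv_lvl r M t j : Dv r (us M) t -> Dv (r * P ^+ j) (us (M + j)) t.
Proof.
elim: j => [|j IH]; first by rewrite expr0 mulr1 addn0.
move=> H; have := IH H; rewrite -usS addnS => /(Dv_shift (ltnW hp)).
by rewrite exprSr mulrA.
Qed.

Definition Sg (x : G) : Prop := exists M r, RM r /\ Dv r (us M) x.

Definition pi (e : Ecar) : G :=
  act (val e.2 * P ^+ kq (val e.2)) (us (kq (val e.2))).

Lemma piDv (e : Ecar) N : (kq (val e.2) <= N)%N ->
  Dv (val e.2 * P ^+ N) (us N) (pi e).
Proof.
move=> hN; have H := actP (us (kq (val e.2))) (Rp_RMN (RtyP e.2) (leqnn _)).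
have := Dv_lvl (N - kq (val e.2)) H.
by rewrite subnKC // -mulrA -exprD subnKC.
Qed.
Lemma EsubE (x y : Ecar) : x - y = eadd x (eopp y).
Proof. by []. Qed.
Lemma EaddE (x y : Ecar) : x + y = eadd x y.
Proof. by []. Qed.

Lemma Ei_sub x y : Ei (x - y) = Ei x - Ei y.
Proof.
rewrite EsubE; apply: Eext => /=; last by rewrite subrr.
by rewrite !f0q subr0 addr0.
Qed.

Lemma pi_sub x y : pi (x - y) = pi x - pi y.
Proof.
rewrite EsubE.
set N := (kq (val x.2) + kq (val y.2) + kq (val (eadd x (eopp y)).2))%N.
have h1 := @piDv x N.
have h2 := @piDv y N.
have h3 := @piDv (eadd x (eopp y)) N.
apply: (Dv_uniq tf (h3 _)); first by rewrite /N; lia.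
have -> : val (eadd x (eopp y)).2 * P ^+ N = val x.2 * P ^+ N + - (val y.2 * P ^+ N).
  by rewrite /= mulrBl.
by apply: Dv_add; [apply: h1 | apply: Dv_opp; apply: h2]; rewrite /N; lia.
Qed.

Lemma Ei_inj : injective Ei.
Proof. by move=> x y [] . Qed.

Lemma pi_S e : Sg (pi e).
Proof.
exists (kq (val e.2)), (val e.2 * P ^+ kq (val e.2)); split.
  exact: (Rp_RMN (RtyP e.2) (leqnn _)).
by apply: piDv.
Qed.

Lemma pi_surj a : Sg a -> exists e, pi e = a.
Proof.
move=> [M [r [Hr Ha]]].
have Hq : Rp (r / P ^+ M).
  by exists M; rewrite divfK ?PX_neq0.
pose e : Ecar := (0, exist _ (r / P ^+ M) ((asbP _).2 Hq)).
exists e; set N := (kq (val e.2) + M)%N.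
have h1 := @piDv e N.
have h2 := Dv_lvl (N - M) Ha.
rewrite subnKC in h2; last by rewrite /N; lia.
apply: (Dv_uniq tf (h1 _)); first by rewrite /N; lia.
have -> : val e.2 * P ^+ N = r * P ^+ (N - M).
  rewrite /= -{1}(subnKC (_ : (M <= N)%N)); last by rewrite /N; lia.
  by rewrite exprD mulrA divfK ?PX_neq0.
exact: h2.
Qed.

Lemma pi_ker e : pi e = 0 <-> exists x, Ei x = e.
Proof.
split; last first.
  move=> [x <-]; rewrite /pi /= mul0r; exact: act0.
move=> H; exists e.1; apply: Eext => //=.
have := @piDv e _ (leqnn _); rewrite H => -[a [b [hb Eq Hab]]].
move: Hab; rewrite mul0rz => /esym Hab.
have a0 : a = 0.
  apply/eqP; apply/negP => /negP ha; move: (us_ne0 (kq (val e.2))).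
  by rewrite (tfz tf ha Hab) eqxx.
move: Eq; rewrite a0 mul0r => /eqP; rewrite mulf_eq0 (negPf (PX_neq0 _)) orbF.
by move/eqP.
Qed.
Lemma RM_muln r n : RM r -> RM (r *+ n).
Proof.
move=> H; elim: n => [|n IH]; first by rewrite mulr0n; have := @RM_int G 0.
by rewrite mulrSr; apply: RM_add.
Qed.

Lemma Rp_muln q n : Rp q -> Rp (q *+ n).
Proof. by move=> [M HM]; exists M; rewrite mulrnAl; apply: RM_muln. Qed.

Definition emb (q : rat) : Rty := insubd r0 q.
Lemma embK q : Rp q -> val (emb q) = q.
Proof. by move=> H; rewrite /emb insubdK //; apply/asbP. Qed.

Lemma zm_id4 (Z : zmodType) (A B C Gq Gq' Gqq : Z) :
  A + B = C + (Gqq - Gq - Gq') -> C + Gqq = A + Gq + (B + Gq').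
Proof.
move=> H; rewrite addrACA H -addrA; congr (_ + _).
by rewrite !addrA (ACl (1*(2*4)*(3*5))) /= !addNr !addr0.
Qed.

Section Extract.
Variable rr : Ecar -> G.
Hypothesis rr_sub : forall x y, rr (x - y) = rr x - rr y.
Hypothesis rr_i : forall x, rr (Ei x) = x.

Definition lam N q := rr (0, emb q) + Gam q N.

Lemma key q q' : Rp q -> Rp q' ->
  rr (0, emb q) + rr (0, emb q') = rr (0, emb (q + q')) + f q q'.
Proof.
move=> Hq Hq'; have [_ _ rD _] := addf_props rr_sub.
have E : ((0, emb q) : Ecar) + (0, emb q') = ((0, emb (q + q')) : Ecar) + Ei (f q q').
  rewrite !EaddE; apply: Eext => /=.
    by rewrite !embK ?fq0 ?add0r ?addr0 //; apply: Rp_add.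
  by rewrite !embK ?addr0 //; apply: Rp_add.
by rewrite -(rr_i (f q q')) -!rD E.
Qed.

Lemma lam_add q q' N : Rp q -> Rp q' -> (kq q <= N)%N -> (kq q' <= N)%N ->
  (kq (q + q') <= N)%N -> lam N (q + q') = lam N q + lam N q'.
Proof.
move=> Hq Hq' h1 h2 h3; rewrite /lam; apply: zm_id4.
by rewrite key // (fE Hq Hq' h1 h2 h3).
Qed.

Lemma lam0 N : lam N 0 = 0.
Proof.
rewrite /lam Gam0 addr0.
have -> : ((0, emb 0) : Ecar) = Ei 0 by apply: Eext => //=; rewrite embK //; exact: Rp0.
exact: rr_i.
Qed.

Lemma lam_nat q N n : Rp q -> RM (q * P ^+ N) -> lam N (q *+ n) = lam N q *+ n.
Proof.
move=> Hq HN; elim: n => [|n IH]; first by rewrite !mulr0n lam0.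
have Hn : forall m, RM (q *+ m * P ^+ N) by move=> m; rewrite mulrnAl; apply: RM_muln.
rewrite mulrSr lam_add ?IH ?mulrSr //; first exact: Rp_muln.
- by apply: kq_le => //; apply: Rp_muln.
- exact: kq_le.
- by rewrite -mulrSr; apply: kq_le; [apply: Rp_muln | apply: Hn].
Qed.

Lemma lamS q N : (kq q <= N)%N -> lam N.+1 q = lam N q + act (q * P ^+ N) (g N).
Proof. by move=> h; rewrite /lam GamS // addrA. Qed.

Definition hh M := lam M (P ^+ M)^-1.

Lemma RM1 : RM 1.
Proof. by have := @RM_nat G 1. Qed.

Lemma hh_rec M : hh M.+1 *+ p = hh M + g M.
Proof.
rewrite /hh.
have Hq1 : Rp (P ^+ M.+1)^-1 by exists M.+1; rewrite mulVf ?PX_neq0 //; exact: RM1.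
have Hq0 : Rp (P ^+ M)^-1 by exists M; rewrite mulVf ?PX_neq0 //; exact: RM1.
rewrite -lam_nat //; last by rewrite mulVf ?PX_neq0 //; exact: RM1.
have -> : (P ^+ M.+1)^-1 *+ p = (P ^+ M)^-1.
  by rewrite -[(P ^+ M.+1)^-1 *+ p]mulr_natr exprS invfM mulrAC mulVf ?P_neq0 ?mul1r.
rewrite lamS; last by apply: kq_le => //; rewrite mulVf ?PX_neq0 //; exact: RM1.
by rewrite mulVf ?PX_neq0 // act1.
Qed.

End Extract.

Lemma solve_sec : Ext_zero Sg G -> exists h : nat -> G, forall M, h M.+1 *+ p = h M + g M.
Proof.
move=> H.
have [rr [H1 H2]] := H Ecar Ei pi Ei_sub pi_sub Ei_inj pi_S pi_surj pi_ker.
by exists (hh rr); apply: hh_rec.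
Qed.
Lemma RM_PX N : RM (P ^+ N).
Proof. by rewrite -natrX; apply: RM_nat. Qed.

Lemma Sg_sub : subgroup Sg.
Proof.
split.
  exists 0%N, 0; split; first by have := @RM_int G 0.
  by exists 0, 1; split => //; rewrite mul0r.
move=> x y [M [r [Hr Hx]]] [M' [r' [Hr' Hy]]].
exists (M + M')%N, (r * P ^+ M' + - (r' * P ^+ M)); split.
  apply: RM_add; first exact: (RM_mul (RM_PX _) Hr).
  by apply: RM_opp; exact: (RM_mul (RM_PX _) Hr').
apply: Dv_add; first exact: Dv_lvl.
by apply: Dv_opp; rewrite addnC; apply: Dv_lvl.
Qed.

Lemma Sg_nuc : nuc_submodule Sg.
Proof.
split; first exact: Sg_sub.
move=> q /(RM_nuc tf) Hq s [M [r [Hr Hs]]].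
have Ht := actP s Hq.
exists (act q s).
  exists M, (q * r); split; first exact: (RM_mul Hr Hq).
  exact: (Dv_mul Hs Ht).
apply: (Dv_rep tf Ht); first exact: denq_gt0.
by rewrite divq_num_den.
Qed.

Lemma us_pow M : us M *+ (p ^ M) = us 0.
Proof.
elim: M => [|M IH]; first by rewrite expn0 mulr1n.
by rewrite expnS mulrnA usS.
Qed.

Lemma Sg_rat x : Sg x -> exists A B : int, 0 < B /\ x *~ B = us 0 *~ A.
Proof.
move=> [M [r [_ [a [b [hb _ H]]]]]].
exists a, (b * (p ^ M)%:Z); split.
  by rewrite mulr_gt0 // ltz_nat expn_gt0 (ltnW hp).
by rewrite mulrzA H -mulrzA mulrC mulrzA -pmulrn us_pow.
Qed.

Lemma Sg_rank : finite_rank Sg.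
Proof.
exists 1%N => s Hs Hind; rewrite leqNgt; apply/negP => Hsz.
have [A0 [B0 [hB0 H0]]] := Sg_rat (Hs _ (mem_nth 0 (ltnW Hsz))).
have [A1 [B1 [hB1 H1]]] := Sg_rat (Hs _ (mem_nth 0 Hsz)).
have sum2 : forall c : nat -> int, (forall i, (1 < i)%N -> c i = 0) ->
    \sum_(i < size s) s`_i *~ c i = s`_0 *~ c 0%N + s`_1 *~ c 1%N.
  move=> c hc; case: s Hs Hind Hsz {H0 H1} => [|x0 [|x1 s']] //= _ _ _.
  rewrite !big_ord_recl /= big1 ?addr0 //.
  by move=> i _; rewrite hc // mulr0z.
case: (A1 =P 0) => hA1.
  move: H1; rewrite hA1 mulr0z => /(tfz tf (negbT (gt_eqF hB1))) Hy.
  pose c := fun i : nat => if i == 1%N then (1 : int) else 0.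
  have := Hind c; rewrite sum2; last by move=> i hi; rewrite /c; case: eqP => // E; rewrite E in hi.
  by rewrite /c /= Hy mul0rz addr0 mulr0z => /(_ erefl 1%N Hsz).
pose c := fun i : nat => if i == 0%N then A1 * B0 else if i == 1%N then - (A0 * B1) else 0.
have := Hind c; rewrite sum2; last first.
  by move=> i hi; rewrite /c; case: eqP => [E|_]; [rewrite E in hi | case: eqP => // E; rewrite E in hi].
have E2 : s`_0 *~ (A1 * B0) + s`_1 *~ - (A0 * B1) = 0.
  by rewrite mulrNz [A1 * B0]mulrC [A0 * B1]mulrC !mulrzA H0 H1 -!mulrzA mulrC subrr.
rewrite /c /= E2.
move=> /(_ erefl 0%N (ltnW Hsz)) /eqP; rewrite mulf_eq0 (gt_eqF hB0) orbF.
by move/eqP.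
Qed.

Lemma solve_main : fr_splitter G ->
  exists h : nat -> G, forall M, h M.+1 *+ p = h M + g M.
Proof.
move=> [_ [_ Hsp]]; apply: solve_sec; apply: Hsp; [exact: Sg_nuc | exact: Sg_rank].
Qed.

End Ext.
Lemma key_eq (p : nat) (z z' : int) k k' :
  z%:~R / (p ^ k)%:R = z'%:~R / (p ^ k')%:R :> rat -> (0 < p)%N ->
  z * (p ^ k')%:Z = z' * (p ^ k)%:Z.
Proof.
move=> E hp.
have n1 : ((p ^ k)%:R : rat) != 0 by rewrite pnatr_eq0 -lt0n expn_gt0 hp.
have n2 : ((p ^ k')%:R : rat) != 0 by rewrite pnatr_eq0 -lt0n expn_gt0 hp.
have H : (z * (p ^ k')%:Z)%:~R = (z' * (p ^ k)%:Z)%:~R :> rat.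
  rewrite !intrM -!pmulrn.
  by move: E => /eqP; rewrite eqr_div // => /eqP.
exact: (intr_inj H).
Qed.

Lemma ext_from_solve (G : zmodType) (p : nat) : (1 < p)%N ->
  (forall g : nat -> G, exists h : nat -> G, forall M, h M.+1 *+ p = h M + g M) ->
  Ext_zero (Qp p) G.
Proof.
move=> hp Hsol E i pi hi hpi inj hA hsurj hker.
have [i0 iN iD iZ] := addf_props hi.
have [pi0 piN piD piZ] := addf_props hpi.
have iN' : forall x n, i (x *+ n) = i x *+ n by move=> x n; rewrite !pmulrn iZ.
have piN' : forall x n, pi (x *+ n) = pi x *+ n by move=> x n; rewrite !pmulrn piZ.
have pii : forall x, pi (i x) = 0 by move=> x; apply/hker; exists x.
have hp0 : (0 < p)%N by apply: ltnW.
have pk0 : forall k, ((p ^ k)%:R : rat) != 0.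
  by move=> k; rewrite pnatr_eq0 -lt0n expn_gt0 hp0.
pose qM M : rat := ((p ^ M)%:R)^-1.
have QqM : forall M, Qp p (qM M) by move=> M; exists 1, M; rewrite mul1r.
pose fl M := epsilon (inhabits 0) (fun e => pi e = qM M).
have flP : forall M, pi (fl M) = qM M.
  by move=> M; apply: (epsilon_spec (inhabits 0) (fun e => pi e = qM M)); apply: hsurj.
pose cc M := epsilon (inhabits 0) (fun x => i x = fl M.+1 *+ p - fl M).
have ccP : forall M, i (cc M) = fl M.+1 *+ p - fl M.
  move=> M; apply: (epsilon_spec (inhabits 0) (fun x => i x = fl M.+1 *+ p - fl M)); apply/hker.
  rewrite hpi piN' !flP /qM -[(p ^ M.+1)%:R^-1 *+ p]mulr_natr expnS natrM invfM mulrAC mulVf ?mul1r ?subrr //.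
  by rewrite pnatr_eq0 -lt0n.
have [h Hh] := Hsol (fun M => - cc M).
pose e M := fl M + i (h M).
have eS : forall M, e M.+1 *+ p = e M.
  move=> M; rewrite /e mulrnDl -iN' Hh iD iN ccP.
  by rewrite opprB !addrA [LHS](ACl ((1*4)*3*2)) /= subrr add0r.
have piE : forall M, pi (e M) = qM M by move=> M; rewrite piD pii addr0 flP.
have epow : forall M j, e (M + j)%N *+ (p ^ j) = e M.
  move=> M; elim=> [|j IH]; first by rewrite addn0 expn0 mulr1n.
  by rewrite expnS mulrnA addnS eS IH.
have elift : forall k j (z : int), e k *~ z = e (k + j)%N *~ (z * (p ^ j)%:Z).
  by move=> k j z; rewrite -(epow k j) pmulrn -mulrzA mulrC.
pose zk (a : rat) := epsilon (inhabits (0 : int, 0%N))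
  (fun zk : int * nat => a = zk.1%:~R / (p ^ zk.2)%:R).
pose sig a := e (zk a).2 *~ (zk a).1.
have sig_rep : forall a (z : int) k, a = z%:~R / (p ^ k)%:R -> sig a = e k *~ z.
  move=> a z k Ea.
  have Ez : a = (zk a).1%:~R / (p ^ (zk a).2)%:R.
    by apply: (epsilon_spec (inhabits (0 : int, 0%N)) (fun zk : int * nat => a = zk.1%:~R / (p ^ zk.2)%:R)); exists (z, k).
  rewrite /sig (elift _ k) (elift k (zk a).2) addnC; congr (_ *~ _).
  by apply: key_eq => //; rewrite -Ez.
have sig_pi : forall a, Qp p a -> pi (sig a) = a.
  move=> a [z [k Ea]]; rewrite (sig_rep _ _ _ Ea) piZ piE Ea /qM -mulrzl.
  by rewrite mulrC.
have sig_sub : forall a b, Qp p a -> Qp p b -> sig (a - b) = sig a - sig b.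
  move=> a b [z [k Ea]] [z' [k' Eb]].
  rewrite (sig_rep _ _ _ Ea) (sig_rep _ _ _ Eb) (elift k k') (elift k' k) addnC -mulrzBr.
  apply: sig_rep; rewrite Ea Eb expnD natrM intrB !intrM -!pmulrn.
  by field; rewrite !pk0.
pose r0 x := epsilon (inhabits 0) (fun g => i g = x - sig (pi x)).
have r0P : forall x, i (r0 x) = x - sig (pi x).
  move=> x; apply: (epsilon_spec (inhabits 0) (fun g => i g = x - sig (pi x))); apply/hker.
  by rewrite hpi sig_pi ?subrr.
exists r0; split.
  move=> x y; apply: inj; rewrite hi !r0P hpi sig_sub //.
  by rewrite !opprB !addrA [LHS](ACl (1*4*3*2)) /=.
move=> x; apply: inj; rewrite r0P pii.
by rewrite (sig_rep 0 0 0%N) ?mulr0z ?subr0 // mul0r.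
Qed.

Theorem proposition4p3 (G : zmodType) (U : G -> Prop) (p : nat) :
  fr_splitter G ->
  pure U -> (exists2 u, U u & u != 0) ->
  prime p ->
  in_nuc U (p%:R)^-1 -> ~ in_nuc (fun _ : G => True) (p%:R)^-1 ->
  Ext_zero (Qp p) G.
Proof.
move=> Hsp _ [u Uu u0] hpr HU _.
have tf : torsion_free G by case: Hsp.
have hp : (1 < p)%N by apply: prime_gt1.
have hp0 : (0 < p)%N by apply: ltnW.
have Hdiv : forall s, U s -> exists t, U t /\ t *+ p = s.
  move=> s Us; have [t Ut Ht] := HU s Us; exists t; split => //.
  have := repch tf (denq_gt0 _) (_ : (0 < p%:Z)) (_ : _ = 1%:~R / p%:Z%:~R) Ht.
  rewrite pmulrn mulr1z; apply => //.
  by rewrite divq_num_den mul1r -pmulrn.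
pose nxt s := epsilon (inhabits 0) (fun t => U t /\ t *+ p = s).
pose us M := iter M nxt u.
have usU : forall M, U (us M).
  elim=> [//|M IH].
  by have := epsilon_spec (inhabits 0) _ (Hdiv _ IH) => -[H1 _].
have usS : forall M, us M.+1 *+ p = us M.
  by move=> M; have := epsilon_spec (inhabits 0) _ (Hdiv _ (usU M)) => -[_ H2].
apply: ext_from_solve => // g.
exact: (@solve_main G tf p hp g us).
Qed.
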